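(* Let $\hat q$, $\hat q_\lambda$ be as defined in the context, with $\lambda>0$, and let $\mathcal{C}(x)=\{y\in[C]: s(x,y)\le \hat q\}$ and $\mathcal{C}_\lambda(x)=\{y\in[C]: s_\lambda(x,y)\le\hat q_\lambda\}$. Let $\mathcal{Y}_1(x):=\{y\in[C]: d(y,\hat y(x))\neq 0\}$. Then for every $x$, $$\mathcal{C}_\lambda(x)\cap\mathcal{Y}_1(x)\subseteq \mathcal{C}(x)\cap \mathcal{Y}_1(x).$$
   Context: Classification with $C$ classes, labels in $[C]=\{1,\dots,C\}$. A classifier outputs a softmax vector $\hat\pi(x)\in\mathbb{R}^C$ and predicted class $\hat y(x)=\arg\max_i \hat\pi_i(x)$. A map $g:[C]\to[G]$ partitions the classes into $G$ groups. Define $d(y,y'):=\mathbb{I}\{g(y)\neq g(y')\}$. Given any real-valued score function $s(x,y)$ and $\lambda>0$, define the penalized score $s_\lambda(x,y):=s(x,y)+\lambda\, d(y,\hat y(x))$. Given a calibration set $\{(x_i,y_i)\}_{i=1}^n$ and $\alpha\in(0,1)$ with $\lceil (n+1)(1-\alpha)\rceil\le n$, $\hat q$ (resp. $\hat q_\lambda$) is the $\lceil (n+1)(1-\alpha)\rceil$-th smallest value of $\{s(x_i,y_i)\}_{i=1}^n$ (resp. $\{s_\lambda(x_i,y_i)\}_{i=1}^n$). *)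

(* Defs.v *)
From mathcomp Require Import all_boot all_order all_algebra.
From mathcomp Require Import reals.
Set Implicit Arguments. Unset Strict Implicit. Unset Printing Implicit Defensive.
Import Order.TTheory GRing.Theory Num.Theory.
Local Open Scope ring_scope.

Section Conformal.
Variables (R : realType) (X : Type) (K G : nat).
(* Classes [C] are represented by 'I_K.+1, i.e. C = K+1 >= 1 classes. *)
Notation cls := 'I_K.+1.

Definition yhat (pi : X -> cls -> R) (x : X) : cls :=
  [arg max_(i > ord0) pi x i]%O.

Definition gdist (g : cls -> 'I_G) (y y' : cls) : R := (g y != g y')%:R.

Definition pen_score (pi : X -> cls -> R) (g : cls -> 'I_G) (s : X -> cls -> R)
  (lambda : R) (x : X) (y : cls) : R :=
  s x y + lambda * gdist g y (yhat pi x).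

Definition qidx (n : nat) (alpha : R) : nat :=
  `| Num.ceil ((n.+1)%:R * (1 - alpha)) |%N.

(* k-th smallest (k >= 1) value of the calibration scores *)
Definition kth_smallest (n : nat) (k : nat) (v : 'I_n -> R) : R :=
  nth 0 (sort <=%R [seq v i | i <- enum 'I_n]) k.-1.

Definition qhat (n : nat) (alpha : R) (s : X -> cls -> R)
  (xs : 'I_n -> X) (ys : 'I_n -> cls) : R :=
  @kth_smallest n (qidx n alpha) (fun i => s (xs i) (ys i)).

Definition pred_set (s : X -> cls -> R) (q : R) (x : X) : {set cls} :=
  [set y | s x y <= q].

Definition Y1 (pi : X -> cls -> R) (g : cls -> 'I_G) (x : X) : {set cls} :=
  [set y | gdist g y (yhat pi x) != 0].

End Conformal.

(* Main.v *)
Require Import Defs.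
From mathcomp Require Import all_boot all_order all_algebra.
From mathcomp Require Import reals.
From mathcomp Require Import zify.
Import Order.TTheory GRing.Theory Num.Theory.
Local Open Scope ring_scope.

Section Aux.
Variable R : realType.

Lemma L1 (l : seq R) (j : nat) (t : R) : sorted <=%R l -> (j < size l)%N ->
  (j < count (fun z : R => (z <= t)%R) l)%N -> nth 0 l j <= t.
Proof.
move=> so jl cnt; rewrite leNgt; apply/negP => ltj.
have hd : ~~ has (fun z : R => (z <= t)%R) (drop j l).
  apply/hasP => -[y /(nthP 0) [k hk <-]]; rewrite nth_drop => yt.
  have : nth 0 l j <= nth 0 l (j + k).
    apply: (sorted_leq_nth le_trans lexx) => //; rewrite ?inE /=.
    - by move: hk; rewrite size_drop -ltn_subRL.
    - exact: leq_addr.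
  move=> h; move: (le_trans h yt); by rewrite leNgt ltj.
move: cnt; rewrite -(cat_take_drop j l) count_cat.
move: hd; rewrite has_count -leqNgt leqn0 => /eqP ->.
rewrite addn0 => h; have := count_size (fun z : R => (z <= t)%R) (take j l).
rewrite size_take jl; lia.
Qed.

Lemma L2 (l : seq R) (j : nat) : sorted <=%R l -> (j < size l)%N ->
  (j < count (fun z : R => (z <= nth 0 l j)%R) l)%N.
Proof.
move=> so jl.
have sz : size (take j.+1 l) = j.+1 := size_takel jl.
have ha : all (fun z : R => (z <= nth 0 l j)%R) (take j.+1 l).
  apply/(all_nthP 0) => k; rewrite sz => hk; rewrite nth_take //.
  apply: (sorted_leq_nth le_trans lexx) => //; rewrite ?inE /=.
  exact: leq_trans hk jl.
move: ha; rewrite all_count => /eqP hc.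
rewrite -[X in count _ X](cat_take_drop j.+1 l) count_cat hc sz.
by rewrite addSn ltnS leq_addr.
Qed.

Lemma kth_count n (v : 'I_n -> R) k t :
  (0 < n)%N -> (k <= n)%N ->
  (k.-1 < count (fun i => (v i <= t)%R) (enum 'I_n))%N -> kth_smallest k v <= t.
Proof.
move=> n0 kn h; rewrite /kth_smallest; apply: L1.
- exact: (sort_sorted (@le_total _ R)).
- by rewrite size_sort size_map size_enum_ord; lia.
- by rewrite (permP (permEl (perm_sort _ _))) count_map.
Qed.

Lemma kth_self n (v : 'I_n -> R) k :
  (0 < n)%N -> (k <= n)%N ->
  (k.-1 < count (fun i => (v i <= kth_smallest k v)%R) (enum 'I_n))%N.
Proof.
move=> n0 kn.
have H := @L2 (sort <=%R [seq v i | i <- enum 'I_n]) k.-1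
  (sort_sorted (@le_total _ R) _).
move: H; rewrite (permP (permEl (perm_sort _ _))) count_map /kth_smallest.
apply; by rewrite size_sort size_map size_enum_ord; lia.
Qed.
End Aux.

Lemma key_lemma (R : realType) (X : Type) (K G : nat)
  (pi : X -> 'I_K.+1 -> R) (g : 'I_K.+1 -> 'I_G) (s : X -> 'I_K.+1 -> R)
  (lambda : R) (hlambda : 0 < lambda)
  (n : nat) (xs : 'I_n -> X) (ys : 'I_n -> 'I_K.+1)
  (alpha : R) (hn : (qidx n alpha <= n)%N) :
  qhat alpha (pen_score pi g s lambda) xs ys <= qhat alpha s xs ys + lambda.
Proof.
have gd1 : forall a b, gdist R g a b <= 1.
  by move=> a b; rewrite /gdist; case: (_ != _).
case: n xs ys hn => [|n'] xs ys hn.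
  rewrite /qhat /kth_smallest.
  have -> : enum 'I_0 = [::] by apply: size0nil; rewrite size_enum_ord.
  by rewrite /= nth_nil add0r ltW.
rewrite /qhat; apply: kth_count => //.
have h1 := @kth_self R _ (fun i => s (xs i) (ys i)) _ (ltn0Sn n') hn.
apply: (@leq_trans _ _ _ h1).
apply: sub_count => i /= hi; rewrite /pen_score.
apply: le_trans (lerD hi (lexx lambda)).
rewrite lerD2l -[X in _ <= X]mulr1; apply: ler_wpM2l; [exact: ltW | exact: gd1].
Qed.

Theorem proposition1 (R : realType) (X : Type) (K G : nat)
  (pi : X -> 'I_K.+1 -> R) (g : 'I_K.+1 -> 'I_G) (s : X -> 'I_K.+1 -> R)
  (lambda : R) (hlambda : 0 < lambda)
  (n : nat) (xs : 'I_n -> X) (ys : 'I_n -> 'I_K.+1)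
  (alpha : R) (halpha : 0 < alpha < 1) (hn : (qidx n alpha <= n)%N)
  (x : X) :
  let q := qhat alpha s xs ys in
  let ql := qhat alpha (pen_score pi g s lambda) xs ys in
  (pred_set (pen_score pi g s lambda) ql x :&: Y1 pi g x
     \subset pred_set s q x :&: Y1 pi g x).
Proof.
cbv zeta.
set q := qhat alpha s xs ys.
set ql := qhat alpha (pen_score pi g s lambda) xs ys.
apply/subsetP => y; rewrite !inE => /andP [hp hy]; rewrite hy andbT.
have gd : gdist R g y (yhat pi x) = 1.
  move: hy; rewrite /gdist; case: (g y != g (yhat pi x)) => //; by rewrite eqxx.
move: hp; rewrite /pen_score gd mulr1 => hp.
have key : ql <= q + lambda by apply: key_lemma.
by rewrite -(lerD2r lambda); apply: le_trans key.
Qed.
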